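(* Let $n\ge 3$. For $1\le a,b\le n$ let $e^A_{a,b}=e_a e_b^T-e_b e_a^T\in\mathfrak{so}(n)$, where $e_1,\dots,e_n$ is the canonical basis of $\mathbf{R}^n$. For $2\le i<j\le n$ let $$E_{i,j}=\{C\in(\mathfrak{so}(n))^n:\ \rho(g^{\theta}_{i,j})(C)=C \text{ for all }\theta\in\mathbf{R}\}.$$ Then: (1) for $n=3$: $\bigcap_{2\le i<j\le n}E_{i,j}=E_{2,3}=\mathrm{span}\{e_2\otimes e^A_{2,1}+e_3\otimes e^A_{3,1},\ e_2\otimes e^A_{3,1}-e_3\otimes e^A_{2,1},\ e_1\otimes e^A_{2,3}\}$; (2) for $n=4$: $\bigcap_{2\le i<j\le n}E_{i,j}=\mathrm{span}\{e_2\otimes e^A_{2,1}+e_3\otimes e^A_{3,1}+e_4\otimes e^A_{4,1},\ e_2\otimes e^A_{3,4}-e_3\otimes e^A_{2,4}+e_4\otimes e^A_{2,3}\}$; (3) for $n\ge 5$: $\bigcap_{2\le i<j\le n}E_{i,j}=\mathrm{span}\{\sum_{k=1}^n e_k\otimes e^A_{k,1}\}$.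
   Context: $\mathfrak{so}(n)$ is the space of real antisymmetric $n\times n$ matrices. Elements of $(\mathfrak{so}(n))^n$ are $n$-tuples $C=(C_1,\dots,C_n)$; for $v\in\mathbf{R}^n$ and $M\in\mathfrak{so}(n)$, $v\otimes M$ denotes the tuple whose $\mu$-th entry is $v_\mu M$. The action $\rho$ of $SO(n)$ on $(\mathfrak{so}(n))^n$ is $\rho(g)(C)_\mu=\sum_{\nu=1}^n [g^{-1}]_{\nu,\mu}\, g\,C_\nu\, g^{-1}$. For $i<j$ and $\theta\in\mathbf{R}$, $g^\theta_{i,j}\in SO(n)$ is the rotation equal to the identity except for the entries $(i,i)=(j,j)=\cos\theta$, $(i,j)=-\sin\theta$, $(j,i)=\sin\theta$. *)

(* Defs.v *)
From HB Require Import structures.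
From mathcomp Require Import all_boot all_order all_algebra.
From mathcomp Require Import all_classical all_reals all_analysis.
Set Implicit Arguments. Unset Strict Implicit. Unset Printing Implicit Defensive.
Import Order.TTheory GRing.Theory Num.Theory.
Local Open Scope ring_scope.

Section Defs.
Variable R : realType.

(* Elements of (so(n))^n are represented inside the R-vector space of
   n-tuples of n x n real matrices; antisymmetry is imposed in [in_Eij]. *)
Definition tup (n : nat) := {ffun 'I_n -> 'M[R]_n}.

(* Indices are 1-based natural numbers as in the paper: row i : 'I_n is the
   paper's index i+1. *)
Definition e (n a : nat) : 'cV[R]_n := \col_(i < n) ((i.+1 == a)%N%:R).

Definition eA (n a b : nat) : 'M[R]_n := e n a *m (e n b)^T - e n b *m (e n a)^T.

Definition tens (n : nat) (v : 'cV[R]_n) (M : 'M[R]_n) : tup n :=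
  [ffun mu => v mu 0 *: M].

Definition grot (n i j : nat) (theta : R) : 'M[R]_n :=
  \matrix_(a < n, b < n)
    if (a.+1 == i) && (b.+1 == i) then cos theta
    else if (a.+1 == j) && (b.+1 == j) then cos theta
    else if (a.+1 == i) && (b.+1 == j) then - sin theta
    else if (a.+1 == j) && (b.+1 == i) then sin theta
    else (a == b)%:R.

Definition rho (n : nat) (g : 'M[R]_n) (C : tup n) : tup n :=
  [ffun mu => \sum_(nu < n) (invmx g) nu mu *: (g *m C nu *m invmx g)].

Definition in_son_n (n : nat) (C : tup n) : Prop :=
  forall mu, (C mu)^T = - C mu.

Arguments in_son_n : clear implicits.
Definition in_Eij (n i j : nat) (C : tup n) : Prop :=
  in_son_n n C /\ forall theta : R, rho (grot n i j theta) C = C.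
Arguments in_Eij : clear implicits.

Definition inter_E (n : nat) (C : tup n) : Prop :=
  forall i j : nat, (2 <= i)%N -> (i < j)%N -> (j <= n)%N -> in_Eij n i j C.

End Defs.
Arguments in_Eij {R} n i j C.
Arguments inter_E {R} n C.

(* Main.v *)
Require Import Defs.
From HB Require Import structures.
From mathcomp Require Import all_boot all_order all_algebra.
From mathcomp Require Import all_classical all_reals all_analysis.
Import Order.TTheory GRing.Theory Num.Theory.
From mathcomp Require Import ring lra zify.
Local Open Scope ring_scope.
Set Implicit Arguments. Unset Strict Implicit. Unset Printing Implicit Defensive.



Section S.
Variable R : realType.

Lemma sum_delta n (x : 'I_n) (f : 'I_n -> R) :
  \sum_(b < n) (b == x)%:R * f b = f x.
Proof.
rewrite (bigD1 x) //= eqxx mul1r big1 ?addr0 // => b /negbTE ->; by rewrite mul0r.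
Qed.

Lemma grotE n (k l : 'I_n) (t : R) (a b : 'I_n) : k != l ->
  grot n k.+1 l.+1 t a b =
  if a == k then (b == k)%:R * cos t + (b == l)%:R * - sin t
  else if a == l then (b == k)%:R * sin t + (b == l)%:R * cos t
  else (b == a)%:R.
Proof.
move=> kl; rewrite mxE !eqSS !val_eqE.
have lk : (l == k) = false by rewrite eq_sym (negbTE kl).
have kl' := negbTE kl.
case: (eqVneq a k) => [->|ak].
  case: (eqVneq b k) => [->|bk]; first by rewrite /= ?kl' ?lk /=; ring.
  case: (eqVneq b l) => [_|bl]; first by rewrite /= ?kl' ?lk /=; ring.
  by rewrite /= ?kl' ?lk /= ?andbF /=; ring.
case: (eqVneq a l) => [->|al].
  case: (eqVneq b k) => [->|bk]; first by rewrite /= ?kl' ?lk /=; ring.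
  case: (eqVneq b l) => [_|bl]; first by rewrite /= ?kl' ?lk /=; ring.
  by rewrite /= ?kl' ?lk /= ?andbF /=; ring.
by rewrite /= ?andbF eq_sym.
Qed.

Definition rotf n (k l : 'I_n) (t : R) (f : 'I_n -> R) (a : 'I_n) : R :=
  if a == k then cos t * f k - sin t * f l
  else if a == l then sin t * f k + cos t * f l
  else f a.

Lemma sum_rot n (k l : 'I_n) (t : R) (f : 'I_n -> R) a : k != l ->
  \sum_b grot n k.+1 l.+1 t a b * f b = rotf k l t f a.
Proof.
move=> kl; rewrite /rotf.
under eq_bigr => b _ do rewrite grotE //.
case: ifP => _; [|case: ifP => _].
- under eq_bigr => b _ do rewrite mulrDl -!mulrA.
  by rewrite big_split /= !sum_delta; ring.
- under eq_bigr => b _ do rewrite mulrDl -!mulrA.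
  by rewrite big_split /= !sum_delta; ring.
- by rewrite sum_delta.
Qed.

Lemma grot_orth n (k l : 'I_n) (t : R) : k != l ->
  grot n k.+1 l.+1 t *m (grot n k.+1 l.+1 t)^T = 1%:M.
Proof.
move=> kl; apply/matrixP => a b; rewrite !mxE.
under eq_bigr => m _ do rewrite [X in _ * X]mxE.
rewrite sum_rot // /rotf !grotE //.
have h := cos2Dsin2 t.
have lk : (l == k) = false by rewrite eq_sym (negbTE kl).
have kl' := negbTE kl.
case: (eqVneq a k) => [->|ak].
  case: (eqVneq b k) => [?|bk]; first by try subst; rewrite /= ?eqxx ?kl' ?lk /=; nra.
  case: (eqVneq b l) => [?|bl]; first by try subst; rewrite /= ?eqxx ?kl' ?lk /=; nra.
  by rewrite /= ?eqxx ?kl' ?lk ?(negbTE bk) ?(negbTE bl) ?(eq_sym k b) ?(negbTE bk) /=; nra.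
case: (eqVneq a l) => [->|al].
  case: (eqVneq b k) => [?|bk]; first by try subst; rewrite /= ?eqxx ?kl' ?lk /=; nra.
  case: (eqVneq b l) => [?|bl]; first by try subst; rewrite /= ?eqxx ?kl' ?lk /=; nra.
  by rewrite /= ?eqxx ?kl' ?lk ?(negbTE bk) ?(negbTE bl) ?(eq_sym l b) ?(negbTE bl) /=; nra.
case: (eqVneq b k) => [?|bk]; first by try subst; rewrite /= ?eqxx ?kl' ?lk ?(negbTE ak) /=; nra.
case: (eqVneq b l) => [?|bl]; first by try subst; rewrite /= ?eqxx ?kl' ?lk ?(negbTE al) /=; nra.
by rewrite /= ?(negbTE bk) ?(negbTE bl) /= eq_sym.
Qed.

Lemma grot_inv n (k l : 'I_n) (t : R) : k != l ->
  invmx (grot n k.+1 l.+1 t) = (grot n k.+1 l.+1 t)^T.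
Proof.
move=> kl; have O := grot_orth t kl.
have [U _] := mulmx1_unit O.
by rewrite -[RHS](mulKmx U) O mulmx1.
Qed.

Lemma rhoE n (k l : 'I_n) (t : R) (C : tup R n) mu a b : k != l ->
  rho (grot n k.+1 l.+1 t) C mu a b =
  rotf k l t (fun nu => rotf k l t (fun be => rotf k l t (fun al => C nu al be) a) b) mu.
Proof.
move=> kl; rewrite /rho grot_inv // ffunE summxE.
rewrite -sum_rot //; apply: eq_bigr => nu _.
rewrite !mxE -sum_rot //; congr (_ * _).
apply: eq_bigr => be _; rewrite !mxE mulrC; congr (_ * _).
rewrite -sum_rot //; apply: eq_bigr => al _; by rewrite !mxE.
Qed.
End S.

Section S1b.
Variable R : realType.
Lemma eq_rotf n (k l : 'I_n) (t : R) f g a : (forall x, f x = g x) -> rotf k l t f a = rotf k l t g a.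
Proof. by move=> fg; rewrite /rotf !fg. Qed.

Lemma rhoEF n (k l : 'I_n) (t : R) (C : tup R n) (F : 'I_n -> 'I_n -> 'I_n -> R) mu a b :
  k != l -> (forall nu al be, C nu al be = F nu al be) ->
  rho (grot n k.+1 l.+1 t) C mu a b =
  rotf k l t (fun nu => rotf k l t (fun be => rotf k l t (fun al => F nu al be) a) b) mu.
Proof.
move=> kl CF; rewrite rhoE //.
apply: eq_rotf => nu; apply: eq_rotf => be; apply: eq_rotf => al; exact: CF.
Qed.
End S1b.


Section S2.
Variable R : realType.

Lemma e_E n a (x : 'I_n) (y : 'I_1) : e R n a x y = (x.+1 == a)%:R.
Proof. by rewrite mxE. Qed.

Lemma eA_E n a b (x y : 'I_n) :
  eA R n a b x y = (x.+1 == a)%:R * (y.+1 == b)%:R - (x.+1 == b)%:R * (y.+1 == a)%:R.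
Proof. by rewrite !mxE !big_ord1 !mxE. Qed.

Lemma tens_E n (v : 'cV[R]_n) M mu (x y : 'I_n) : tens v M mu x y = v mu 0 * M x y.
Proof. by rewrite ffunE mxE. Qed.

Definition Xf n (nu al be : 'I_n.+1) : R :=
  (al == nu)%:R * (be == ord0)%:R - (al == ord0)%:R * (be == nu)%:R.

Lemma Xsum_E n (nu al be : 'I_n.+1) :
  (\sum_(1 <= k < n.+2) tens (e R n.+1 k) (eA R n.+1 k 1)) nu al be = Xf nu al be.
Proof.
rewrite sum_ffunE summxE.
under eq_bigr => k _ do rewrite tens_E e_E eA_E.
rewrite (bigD1_seq nu.+1); [| by rewrite mem_index_iota /= ltnS ltn_ord | by rewrite /index_iota iota_uniq].
rewrite big1_seq /=.
  by rewrite addr0 eqxx mul1r /Xf !eqSS.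
move=> k /andP [kn _]; by rewrite eq_sym (negbTE kn) mul0r.
Qed.

Lemma rhoS n (g : 'M[R]_n) (C : tup R n) mu a b : invmx g = g^T ->
  rho g C mu a b = \sum_nu g mu nu * \sum_be g b be * \sum_al g a al * C nu al be.
Proof.
move=> gi; rewrite /rho gi ffunE summxE; apply: eq_bigr => nu _.
rewrite !mxE; congr (_ * _).
by apply: eq_bigr => be _; rewrite !mxE mulrC; congr (_ * _).
Qed.

Lemma sum_delta_r n (x : 'I_n) (f : 'I_n -> R) :
  \sum_(b < n) f b * (b == x)%:R = f x.
Proof. by under eq_bigr => b _ do rewrite mulrC; rewrite sum_delta. Qed.

Lemma Xinv n (C : tup R n.+1) (k l : 'I_n.+1) (t : R) :
  (forall nu al be, C nu al be = Xf nu al be) ->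
  k != l -> k != ord0 -> l != ord0 ->
  rho (grot n.+1 k.+1 l.+1 t) C = C.
Proof.
move=> CE kl k0 l0; set g := grot _ _ _ t.
have gz : forall a, g a ord0 = (a == ord0)%:R.
  have zk : (ord0 == k) = false by rewrite eq_sym (negbTE k0).
  have zl : (ord0 == l) = false by rewrite eq_sym (negbTE l0).
  move=> a; rewrite /g grotE // zk zl /=.
  case: ifP => ak; [|case: ifP => al]; rewrite ?mul0r ?addr0.
  - by rewrite (eqP ak) (negbTE k0).
  - by rewrite (eqP al) (negbTE l0).
  - by rewrite eq_sym.
have O := grot_orth t kl.
have go : forall x y, \sum_nu g x nu * g y nu = (x == y)%:R.
  move=> x y; have := congr1 (fun M : 'M[R]_n.+1 => M x y) O; rewrite !mxE => <-.
  by apply: eq_bigr => nu _; rewrite [_^T nu y]mxE.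
apply/ffunP => mu; apply/matrixP => a b.
rewrite rhoS ?grot_inv // CE /Xf.
transitivity (\sum_nu g mu nu * (g a nu * (b == ord0)%:R - (a == ord0)%:R * g b nu)).
  apply: eq_bigr => nu _; congr (_ * _).
  transitivity (\sum_be g b be * (g a nu * (be == ord0)%:R - (a == ord0)%:R * (be == nu)%:R)).
    apply: eq_bigr => be _; congr (_ * _).
    under eq_bigr => al _ do rewrite CE /Xf mulrBr !mulrA.
    by rewrite sumrB -!mulr_suml !sum_delta_r gz.
  under eq_bigr => be _ do rewrite mulrBr !mulrA (mulrAC (g b be)) (mulrAC (g b be) (a == ord0)%:R).
  by rewrite sumrB -!mulr_suml !sum_delta_r gz; ring.
under eq_bigr => nu _ do rewrite mulrBr !mulrA.
rewrite sumrB -!mulr_suml go.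
under [X in _ - X]eq_bigr => nu _ do rewrite mulrAC.
rewrite -mulr_suml go.
rewrite (eq_sym a mu) (eq_sym b mu); ring.
Qed.

End S2.


Section S3.
Variable R : realType.

Definition sg2 n (k x : 'I_n) : R := if x == k then -1 else 1.
Definition sw n (k l x : 'I_n) : 'I_n := if x == k then l else if x == l then k else x.
Definition sgp n (k l x : 'I_n) : R := if (x == k) || (x == l) then -1 else 1.

Lemma rot_pihalf n (k l : 'I_n) f x : k != l ->
  rotf k l (pi / 2) f x = sg2 k x * f (sw k l x).
Proof.
move=> kl; rewrite /rotf /sg2 /sw cos_pihalf sin_pihalf.
case: ifP => _; [|case: ifP => _]; ring.
Qed.

Lemma rot_pi n (k l : 'I_n) f x : k != l ->
  rotf k l pi f x = sgp k l x * f x.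
Proof.
move=> kl; rewrite /rotf /sgp cospi sinpi.
case: (eqVneq x k) => [->|xk] /=; first ring.
case: (eqVneq x l) => [->|xl] /=; ring.
Qed.

Lemma Epi2 n (k l : 'I_n) (C : tup R n) : k != l ->
  (forall t, rho (grot n k.+1 l.+1 t) C = C) -> forall mu a b,
  C mu a b = sg2 k mu * sg2 k b * sg2 k a * C (sw k l mu) (sw k l a) (sw k l b).
Proof.
move=> kl H mu a b.
have := congr1 (fun D : tup R n => D mu a b) (H (pi / 2)).
rewrite /= rhoE // rot_pihalf // /= rot_pihalf // /= rot_pihalf // => <-; ring.
Qed.

Lemma Epi n (k l : 'I_n) (C : tup R n) : k != l ->
  (forall t, rho (grot n k.+1 l.+1 t) C = C) -> forall mu a b,
  C mu a b = sgp k l mu * sgp k l b * sgp k l a * C mu a b.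
Proof.
move=> kl H mu a b.
have := congr1 (fun D : tup R n => D mu a b) (H pi).
rewrite /= rhoE // rot_pi // /= rot_pi // /= rot_pi // => E; rewrite -{1}E; ring.
Qed.

Lemma exists_notin n (s : seq 'I_n) : (size s < n)%N -> exists m, m \notin s.
Proof.
move=> sz; case: (pickP [pred m | m \notin s]) => [m /= h|h]; first by exists m.
have : (#|[set: 'I_n]| <= #|[set x in s]|)%N.
  apply: subset_leq_card; apply/fintype.subsetP => x _; rewrite inE; by move: (h x) => /= /negbFE.
rewrite cardsT card_ord cardsE => /leq_trans /(_ (card_size s)); by rewrite leqNgt sz.
Qed.

Definition HA n (C : tup R n) := forall mu a b, C mu b a = - C mu a b.
Definition HI n (C : tup R n) := forall k l : 'I_n, (0 < k)%N -> (k < l)%N ->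
  forall t, rho (grot n k.+1 l.+1 t) C = C.

Lemma Epi_sym n (C : tup R n) (k l : 'I_n) : HI C -> k != l -> (0 < k)%N -> (0 < l)%N ->
  forall mu a b, C mu a b = sgp k l mu * sgp k l b * sgp k l a * C mu a b.
Proof.
move=> hi kl k0 l0; case: (ltngtP k l) => [lt|gt|eq].
- by apply: Epi => //; apply: hi.
- have E := Epi (negbT (ltn_eqF gt) : l != k) (hi l k l0 gt).
  move=> mu a b; rewrite {1}E /sgp.
  by rewrite !(orbC (_ == l)).
- by move/val_inj: eq kl => ->; rewrite eqxx.
Qed.

Lemma Zero n (C : tup R n) (p m mu a b : 'I_n) : HI C -> (0 < p)%N -> (0 < m)%N ->
  p != m -> m \notin [:: mu; a; b] -> (mu == p) (+) (a == p) (+) (b == p) ->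
  C mu a b = 0.
Proof.
move=> hi p0 m0 pm; rewrite !inE !negb_or => /and3P [mmu ma mb] odd.
have E := Epi_sym hi pm p0 m0 mu a b.
move: E; rewrite /sgp !(eq_sym _ m) (negbTE mmu) (negbTE ma) (negbTE mb) !orbF.
move: odd; case: (mu == p); case: (a == p); case: (b == p) => //= _ E; lra.
Qed.

Lemma gt0_ord n (x : 'I_n.+1) : x != ord0 -> (0 < x)%N.
Proof. by rewrite lt0n -val_eqE. Qed.

Section FW.
Variable n : nat.
Variable C : tup R n.+1.
Hypothesis ha : HA C.
Hypothesis hi : HI C.
Variable o : 'I_n.+1.
Hypothesis o1 : val o = 1%N.
Hypothesis n4 : (3 < n.+1)%N.

Let lam : R := C o o ord0.

Lemma P_aa (a b : 'I_n.+1) : a != b -> C a a b = lam * Xf R a a b.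
Proof.
move=> ab; rewrite /Xf eqxx mul1r.
case: (eqVneq a ord0) => [a0|a0].
  subst a.
  have b0 : b != ord0 by rewrite eq_sym.
  have [m] := @exists_notin _ [:: ord0; b] (leq_ltn_trans (isT : (2 <= 3)%N) n4).
  rewrite !inE negb_or => /andP [m0 mb].
  rewrite (@Zero _ _ b m) //=; try exact: gt0_ord; try ring.
  - by rewrite eq_sym.
  - by rewrite !inE !negb_or m0 mb.
  - by rewrite eqxx eq_sym (negbTE b0).
case: (eqVneq b ord0) => [b0|b0].
  subst b => /=.
  case: (eqVneq a o) => [->|ao]; first by rewrite /lam; ring.
  have oa : (o < a)%N.
    have a0' : (0 < a)%N by exact: gt0_ord.
    have o1' : nat_of_ord o = 1%N := o1.
    rewrite o1' ltn_neqAle a0' andbT.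
    apply: contra ao => /eqP h; apply/eqP/val_inj => /=.
    by rewrite -h o1'.
  have oa' : o != a by rewrite eq_sym.
  have o0 : (0 < o)%N by rewrite o1.
  have E := Epi2 oa' (hi o0 oa) o o ord0.
  move: E; rewrite /sg2 /sw eqxx.
  have z : (ord0 == o) = false.
    by apply/negbTE; rewrite -val_eqE /= o1.
  rewrite z (_ : (ord0 == a) = false) ?(eq_sym ord0) ?(negbTE a0) // /lam => ->; ring.
have [m] := @exists_notin _ [:: ord0; a; b] n4.
rewrite !inE !negb_or => /and3P [m0 ma mb].
rewrite (@Zero _ _ b m) //=; try exact: gt0_ord; try ring.
- by rewrite eq_sym.
- by rewrite !inE !negb_or ma mb.
- by rewrite eqxx (negbTE ab).
Qed.

Lemma Xf_distinct (mu a b : 'I_n.+1) : mu != a -> mu != b -> Xf R mu a b = 0.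
Proof.
move=> ma mb; rewrite /Xf (eq_sym a mu) (negbTE ma) (eq_sym b mu) (negbTE mb) /=; ring.
Qed.

Lemma FWgen (mu a b : 'I_n.+1) :
  ~~ [&& mu != a, a != b, mu != b, mu != ord0, a != ord0 & b != ord0] ->
  C mu a b = lam * Xf R mu a b.
Proof.
move=> H.
case: (eqVneq a b) => [<-|ab].
  have -> : C mu a a = 0 by have := ha mu a a; lra.
  rewrite /Xf; ring.
case: (eqVneq mu a) => [->|mua]; first exact: P_aa.
case: (eqVneq mu b) => [->|mub].
  rewrite ha P_aa 1?eq_sym // /Xf !eqxx; ring.
rewrite Xf_distinct // mulr0.
move: H; rewrite mua ab mub /= => H.
have nlt : (size [:: ord0; mu; a; b] <= n.+1)%N by [].
case: (eqVneq mu ord0) => [m0|m0].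
  subst mu.
  have a0 : a != ord0 by rewrite eq_sym.
  have [m] := @exists_notin _ [:: ord0; a; b] n4.
  rewrite !inE !negb_or => /and3P [mz ma mb].
  apply: (@Zero _ _ a m) => //; try exact: gt0_ord.
  - by rewrite eq_sym.
  - by rewrite !inE !negb_or mz ma mb.
  - by rewrite eqxx (negbTE mua) (eq_sym b) (negbTE ab).
case: (eqVneq a ord0) => [a0|a0].
  subst a.
  have [m] := @exists_notin _ [:: ord0; mu; b] n4.
  rewrite !inE !negb_or => /and3P [mz ma mb].
  apply: (@Zero _ _ mu m) => //; try exact: gt0_ord.
  - by rewrite eq_sym.
  - by rewrite !inE !negb_or mz ma mb.
  - by rewrite eqxx (eq_sym ord0) (negbTE m0) (eq_sym b) (negbTE mub).
case: (eqVneq b ord0) => [b0|b0]; last by rewrite m0 a0 b0 in H.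
subst b.
have [m] := @exists_notin _ [:: ord0; mu; a] n4.
rewrite !inE !negb_or => /and3P [mz ma mb].
apply: (@Zero _ _ mu m) => //; try exact: gt0_ord.
- by rewrite eq_sym.
- by rewrite !inE !negb_or mz ma mb.
- by rewrite eqxx (eq_sym a) (negbTE mua) (eq_sym ord0) (negbTE m0).
Qed.

Lemma FWall5 : (4 < n.+1)%N -> forall mu a b : 'I_n.+1, C mu a b = lam * Xf R mu a b.
Proof.
move=> n5 mu a b.
case H: [&& mu != a, a != b, mu != b, mu != ord0, a != ord0 & b != ord0];
  last by apply: FWgen; rewrite H.
case/andP: H => mua /andP [ab /andP [mub /andP [m0 /andP [a0 b0]]]].
rewrite Xf_distinct // mulr0.
have [m] := @exists_notin _ [:: ord0; mu; a; b] n5.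
rewrite !inE !negb_or => /and4P [mz mm ma mb].
apply: (@Zero _ _ mu m) => //; try exact: gt0_ord.
- by rewrite eq_sym.
- by rewrite !inE !negb_or mm ma mb.
- by rewrite eqxx (eq_sym a) (negbTE mua) (eq_sym b) (negbTE mub).
Qed.
End FW.
End S3.


Section S5.
Variable R : realType.

Lemma span_ind n (P : tup R n -> Prop) : P 0 ->
  (forall x y, P x -> P y -> P (x + y)) -> (forall c x, P x -> P (c *: x)) ->
  forall s, (forall x, x \in s -> P x) -> forall v, v \in << s >>%VS -> P v.
Proof.
move=> P0 PD PZ; elim=> [|x s IH] Hs v.
  by rewrite span_nil memv0 => /eqP ->.
rewrite span_cons => /memv_addP [y /vlineP [c ->] [z zs ->]].
apply: PD; first by apply: PZ; apply: Hs; rewrite mem_head.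
by apply: IH => // w ws; apply: Hs; rewrite inE ws orbT.
Qed.

Lemma rhoD n (g : 'M[R]_n) C D : rho g (C + D) = rho g C + rho g D.
Proof.
apply/ffunP => mu; rewrite !ffunE -big_split; apply: eq_bigr => nu _.
by rewrite ffunE mulmxDr mulmxDl scalerDr.
Qed.

Lemma rhoZ n (g : 'M[R]_n) c C : rho g (c *: C) = c *: rho g C.
Proof.
apply/ffunP => mu; rewrite !ffunE scaler_sumr; apply: eq_bigr => nu _.
by rewrite ffunE -scalemxAr -scalemxAl !scalerA mulrC.
Qed.

Lemma rho0 n (g : 'M[R]_n) : rho g 0 = 0.
Proof. by have := rhoZ g 0 0; rewrite !scale0r. Qed.

Lemma son_HA n (C : tup R n) : in_son_n C <-> HA C.
Proof.
split=> H.
  move=> mu a b; have := congr1 (fun M : 'M[R]_n => M a b) (H mu).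
  by rewrite !mxE.
move=> mu; apply/matrixP => a b; by rewrite !mxE H.
Qed.

Lemma HA0 n : HA (0 : tup R n).
Proof. by move=> mu a b; rewrite !ffunE !mxE oppr0. Qed.
Lemma HAD n (C D : tup R n) : HA C -> HA D -> HA (C + D).
Proof. by move=> hc hd mu a b; rewrite !ffunE !mxE hc hd opprD. Qed.
Lemma HAZ n c (C : tup R n) : HA C -> HA (c *: C).
Proof. by move=> hc mu a b; rewrite !ffunE !mxE hc mulrN. Qed.

Lemma in_Eij_closed n i j : (in_Eij n i j (0 : tup R n)) /\
  (forall x y : tup R n, in_Eij n i j x -> in_Eij n i j y -> in_Eij n i j (x + y)) /\
  (forall (c : R) (x : tup R n), in_Eij n i j x -> in_Eij n i j (c *: x)).
Proof.
split; [|split].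
- split; first by apply/son_HA/HA0.
  by move=> t; rewrite rho0.
- move=> x y [/son_HA hx rx] [/son_HA hy ry]; split; first by apply/son_HA/HAD.
  by move=> t; rewrite rhoD rx ry.
- move=> c x [/son_HA hx rx]; split; first by apply/son_HA/HAZ.
  by move=> t; rewrite rhoZ rx.
Qed.

Lemma inter_E_closed n : (inter_E n (0 : tup R n)) /\
  (forall x y : tup R n, inter_E n x -> inter_E n y -> inter_E n (x + y)) /\
  (forall (c : R) (x : tup R n), inter_E n x -> inter_E n (c *: x)).
Proof.
split; [|split].
- by move=> i j *; case: (in_Eij_closed n i j).
- by move=> x y hx hy i j h1 h2 h3; case: (in_Eij_closed n i j) => _ [+ _]; apply; auto.
- by move=> c x hx i j h1 h2 h3; case: (in_Eij_closed n i j) => _ [_ +]; apply; auto.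
Qed.

Lemma inter_E_HI n (C : tup R n) : inter_E n C -> HI C.
Proof.
move=> H k l k0 kl t; have [_ ] := H k.+1 l.+1 k0 kl (ltn_ord l).
by apply.
Qed.

Lemma inter_E_HA n (C : tup R n) : (2 < n)%N -> inter_E n C -> HA C.
Proof. by move=> n3 H; have [/son_HA ? _] := H 2%N 3%N isT isT n3. Qed.

Lemma HI_inter_E n (C : tup R n) : HA C -> HI C -> inter_E n C.
Proof.
move=> ha hi i j i2 ij jn; split; first exact/son_HA.
have i0 : (i.-1 < n)%N by lia.
have j0 : (j.-1 < n)%N by lia.
have := hi (Ordinal i0) (Ordinal j0).
have -> : (Ordinal i0).+1 = i by rewrite /=; lia.
have -> : (Ordinal j0).+1 = j by rewrite /=; lia.
apply; rewrite /=; lia.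
Qed.

End S5.


Section S6.
Variable R : realType.

Lemma Xf_HA n (C : tup R n.+1) : (forall nu al be, C nu al be = Xf R nu al be) -> HA C.
Proof. by move=> CE mu a b; rewrite !CE /Xf; ring. Qed.

Lemma Xf_HI n (C : tup R n.+1) : (forall nu al be, C nu al be = Xf R nu al be) -> HI C.
Proof.
move=> CE k l k0 kl t; apply: Xinv => //.
- by rewrite -val_eqE /= neq_ltn kl.
- by rewrite -val_eqE /= -lt0n.
- by rewrite -val_eqE /= -lt0n (ltn_trans k0 kl).
Qed.

Lemma part3 (n : nat) : (5 <= n)%N -> forall C : tup R n,
      inter_E _ C <->
      C \in <<[:: (\sum_(1 <= k < n.+1) tens (e R n k) (eA R n k 1))%R]>>%VS.
Proof.
case: n => [//|m] n5 C; split.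
- move=> H.
  have ha := inter_E_HA (leq_trans (isT : (3 <= 5)%N) n5) H.
  have hi := inter_E_HI H.
  have o1 : (1 < m.+1)%N by lia.
  have n4 : (3 < m.+1)%N by lia.
  have E := FWall5 ha hi (o := Ordinal o1) erefl n4 n5.
  set lam := C (Ordinal o1) (Ordinal o1) ord0 in E.
  have -> : C = lam *: (\sum_(1 <= k < m.+2) tens (e R m.+1 k) (eA R m.+1 k 1)).
    apply/ffunP => mu; apply/matrixP => a b.
    by rewrite E !ffunE !mxE Xsum_E.
  by apply: memvZ; apply: memv_span; rewrite mem_head.
- have [P0 [PD PZ]] := inter_E_closed R m.+1.
  apply: span_ind => // x; rewrite inE => /eqP ->.
  apply: HI_inter_E; [apply: Xf_HA | apply: Xf_HI] => ???; exact: Xsum_E.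
Qed.
End S6.


Section S7.
Variable R : realType.

Notation O41 := (@Ordinal 4 1 isT).
Notation O42 := (@Ordinal 4 2 isT).
Notation O43 := (@Ordinal 4 3 isT).

Lemma ord4_cases (x : 'I_4) : [\/ x = ord0, x = O41, x = O42 | x = O43].
Proof.
case: x => [[|[|[|[|m]]]] h]; last by [].
- by apply: Or41; apply: val_inj.
- by apply: Or42; apply: val_inj.
- by apply: Or43; apply: val_inj.
- by apply: Or44; apply: val_inj.
Qed.

Definition B41 : tup R 4 := (tens (e R 4 2) (eA R 4 2 1) + tens (e R 4 3) (eA R 4 3 1)
                    + tens (e R 4 4) (eA R 4 4 1))%R.
Definition B42 : tup R 4 := (tens (e R 4 2) (eA R 4 3 4) - tens (e R 4 3) (eA R 4 2 4)
                    + tens (e R 4 4) (eA R 4 2 3))%R.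

Definition B41f (mu a b : 'I_4) : R :=
  (mu.+1 == 2)%:R * ((a.+1 == 2)%:R * (b.+1 == 1)%:R - (a.+1 == 1)%:R * (b.+1 == 2)%:R)
  + (mu.+1 == 3)%:R * ((a.+1 == 3)%:R * (b.+1 == 1)%:R - (a.+1 == 1)%:R * (b.+1 == 3)%:R)
  + (mu.+1 == 4)%:R * ((a.+1 == 4)%:R * (b.+1 == 1)%:R - (a.+1 == 1)%:R * (b.+1 == 4)%:R).
Definition B42f (mu a b : 'I_4) : R :=
  (mu.+1 == 2)%:R * ((a.+1 == 3)%:R * (b.+1 == 4)%:R - (a.+1 == 4)%:R * (b.+1 == 3)%:R)
  - (mu.+1 == 3)%:R * ((a.+1 == 2)%:R * (b.+1 == 4)%:R - (a.+1 == 4)%:R * (b.+1 == 2)%:R)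
  + (mu.+1 == 4)%:R * ((a.+1 == 2)%:R * (b.+1 == 3)%:R - (a.+1 == 3)%:R * (b.+1 == 2)%:R).

Lemma B41_E' mu a b : B41 mu a b =
  (mu.+1 == 2)%:R * ((a.+1 == 2)%:R * (b.+1 == 1)%:R - (a.+1 == 1)%:R * (b.+1 == 2)%:R)
  + (mu.+1 == 3)%:R * ((a.+1 == 3)%:R * (b.+1 == 1)%:R - (a.+1 == 1)%:R * (b.+1 == 3)%:R)
  + (mu.+1 == 4)%:R * ((a.+1 == 4)%:R * (b.+1 == 1)%:R - (a.+1 == 1)%:R * (b.+1 == 4)%:R).
Proof. by rewrite /B41 !ffunE !mxE !big_ord1 !mxE. Qed.

Lemma B42_E mu a b : B42 mu a b =
  (mu.+1 == 2)%:R * ((a.+1 == 3)%:R * (b.+1 == 4)%:R - (a.+1 == 4)%:R * (b.+1 == 3)%:R)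
  - (mu.+1 == 3)%:R * ((a.+1 == 2)%:R * (b.+1 == 4)%:R - (a.+1 == 4)%:R * (b.+1 == 2)%:R)
  + (mu.+1 == 4)%:R * ((a.+1 == 2)%:R * (b.+1 == 3)%:R - (a.+1 == 3)%:R * (b.+1 == 2)%:R).
Proof. by rewrite /B42 !ffunE !mxE !big_ord1 !mxE. Qed.

Lemma B41_E mu a b : B41 mu a b = Xf R mu a b.
Proof.
rewrite B41_E' /Xf.
by case: (ord4_cases mu) => ->; case: (ord4_cases a) => ->; case: (ord4_cases b) => ->;
  rewrite /=; lra.
Qed.

Lemma B42_inv12 : forall t, rho (grot 4 2 3 t) B42 = B42.
Proof.
move=> t; have h := cos2Dsin2 t.
apply/ffunP => mu; apply/matrixP => a b.
rewrite (@rhoEF _ _ O41 O42 _ _ B42f) //; last exact: B42_E.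
rewrite B42_E -/(B42f mu a b).
case: (ord4_cases mu) => ->; case: (ord4_cases a) => ->; case: (ord4_cases b) => ->;
rewrite /rotf /B42f /=; nra.
Qed.

Lemma B42_inv13 : forall t, rho (grot 4 2 4 t) B42 = B42.
Proof.
move=> t; have h := cos2Dsin2 t.
apply/ffunP => mu; apply/matrixP => a b.
rewrite (@rhoEF _ _ O41 O43 _ _ B42f) //; last exact: B42_E.
rewrite B42_E -/(B42f mu a b).
case: (ord4_cases mu) => ->; case: (ord4_cases a) => ->; case: (ord4_cases b) => ->;
rewrite /rotf /B42f /=; nra.
Qed.

Lemma B42_inv23 : forall t, rho (grot 4 3 4 t) B42 = B42.
Proof.
move=> t; have h := cos2Dsin2 t.
apply/ffunP => mu; apply/matrixP => a b.
rewrite (@rhoEF _ _ O42 O43 _ _ B42f) //; last exact: B42_E.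
rewrite B42_E -/(B42f mu a b).
case: (ord4_cases mu) => ->; case: (ord4_cases a) => ->; case: (ord4_cases b) => ->;
rewrite /rotf /B42f /=; nra.
Qed.

Lemma B42_HI : HI B42.
Proof.
move=> k l k0 kl.
case: (ord4_cases k) => ?; subst k => //; case: (ord4_cases l) => ?; subst l => //.
- exact: B42_inv12.
- exact: B42_inv13.
- exact: B42_inv23.
Qed.

Lemma B42_HA : HA B42.
Proof. by move=> mu a b; rewrite !B42_E; ring. Qed.

Lemma part2_rev (C : tup R 4) : C \in <<[:: B41; B42]>>%VS -> inter_E 4 C.
Proof.
have [P0 [PD PZ]] := inter_E_closed R 4.
apply: span_ind => // x; rewrite !inE => /orP [/eqP ->|/eqP ->].
- apply: HI_inter_E; [apply: Xf_HA | apply: Xf_HI] => ???; exact: B41_E.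
- apply: HI_inter_E; [exact: B42_HA | exact: B42_HI].
Qed.

Lemma lin2 n (P Q : tup R n) (x y : R) mu a b :
  (x *: P + y *: Q) mu a b = x * P mu a b + y * Q mu a b.
Proof. by rewrite !ffunE !mxE. Qed.

Lemma part2_fw (C : tup R 4) : inter_E 4 C -> C \in <<[:: B41; B42]>>%VS.
Proof.
move=> H.
have ha : HA C := inter_E_HA (isT : (2 < 4)%N) H.
have hi := inter_E_HI H.
have E12 := Epi2 (isT : O41 != O42) (hi O41 O42 isT isT).
have E13 := Epi2 (isT : O41 != O43) (hi O41 O43 isT isT).
have E23 := Epi2 (isT : O42 != O43) (hi O42 O43 isT isT).
set x := C O41 O41 ord0.
set y := C O41 O42 O43.
have D1 : C O41 O43 O42 = - C O41 O42 O43 by rewrite ha.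
have D2 : C O42 O41 O43 = - C O41 O42 O43.
  by rewrite (E12 O42 O41 O43) /sg2 /sw /=; ring.
have D3 : C O42 O43 O41 = C O41 O42 O43 by rewrite ha D2 opprK.
have D4 : C O43 O41 O42 = C O41 O42 O43.
  by rewrite (E13 O43 O41 O42) /sg2 /sw /= D1; ring.
have D5 : C O43 O42 O41 = - C O41 O42 O43 by rewrite ha D4.
have -> : C = C O41 O41 ord0 *: B41 + C O41 O42 O43 *: B42.
  apply/ffunP => mu; apply/matrixP => a b; rewrite lin2.
  move: (@FWgen R 3 C ha hi O41 erefl isT mu a b).
  clear E12 E13 E23.
  rewrite B41_E' B42_E -/(B41f mu a b) -/(B42f mu a b).
  (case: (ord4_cases mu) => ->; case: (ord4_cases a) => ->; case: (ord4_cases b) => ->;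
  rewrite /B41f /B42f /Xf /= => G;
  (first [ move/(_ isT): G => G | clear G ]); lra).
apply: memvD; apply: memvZ; apply: memv_span; rewrite !inE eqxx ?orbT //.
Qed.
End S7.


Section S8.
Variable R : realType.

Notation O31 := (@Ordinal 3 1 isT).
Notation O32 := (@Ordinal 3 2 isT).

Lemma ord3_cases (x : 'I_3) : [\/ x = ord0, x = O31 | x = O32].
Proof.
case: x => [[|[|[|m]]] h]; last by [].
- by apply: Or31; apply: val_inj.
- by apply: Or32; apply: val_inj.
- by apply: Or33; apply: val_inj.
Qed.

Definition B31 : tup R 3 := (tens (e R 3 2) (eA R 3 2 1) + tens (e R 3 3) (eA R 3 3 1))%R.
Definition B32 : tup R 3 := (tens (e R 3 2) (eA R 3 3 1) - tens (e R 3 3) (eA R 3 2 1))%R.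
Definition B33 : tup R 3 := tens (e R 3 1) (eA R 3 2 3).

Definition B31f (mu a b : 'I_3) : R :=
  (mu.+1 == 2)%:R * ((a.+1 == 2)%:R * (b.+1 == 1)%:R - (a.+1 == 1)%:R * (b.+1 == 2)%:R)
  + (mu.+1 == 3)%:R * ((a.+1 == 3)%:R * (b.+1 == 1)%:R - (a.+1 == 1)%:R * (b.+1 == 3)%:R).
Definition B32f (mu a b : 'I_3) : R :=
  (mu.+1 == 2)%:R * ((a.+1 == 3)%:R * (b.+1 == 1)%:R - (a.+1 == 1)%:R * (b.+1 == 3)%:R)
  - (mu.+1 == 3)%:R * ((a.+1 == 2)%:R * (b.+1 == 1)%:R - (a.+1 == 1)%:R * (b.+1 == 2)%:R).
Definition B33f (mu a b : 'I_3) : R :=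
  (mu.+1 == 1)%:R * ((a.+1 == 2)%:R * (b.+1 == 3)%:R - (a.+1 == 3)%:R * (b.+1 == 2)%:R).

Lemma B31_E' mu a b : B31 mu a b =
  (mu.+1 == 2)%:R * ((a.+1 == 2)%:R * (b.+1 == 1)%:R - (a.+1 == 1)%:R * (b.+1 == 2)%:R)
  + (mu.+1 == 3)%:R * ((a.+1 == 3)%:R * (b.+1 == 1)%:R - (a.+1 == 1)%:R * (b.+1 == 3)%:R).
Proof. by rewrite /B31 !ffunE !mxE !big_ord1 !mxE. Qed.

Lemma B32_E mu a b : B32 mu a b =
  (mu.+1 == 2)%:R * ((a.+1 == 3)%:R * (b.+1 == 1)%:R - (a.+1 == 1)%:R * (b.+1 == 3)%:R)
  - (mu.+1 == 3)%:R * ((a.+1 == 2)%:R * (b.+1 == 1)%:R - (a.+1 == 1)%:R * (b.+1 == 2)%:R).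
Proof. by rewrite /B32 !ffunE !mxE !big_ord1 !mxE. Qed.

Lemma B33_E mu a b : B33 mu a b =
  (mu.+1 == 1)%:R * ((a.+1 == 2)%:R * (b.+1 == 3)%:R - (a.+1 == 3)%:R * (b.+1 == 2)%:R).
Proof. by rewrite /B33 !ffunE !mxE !big_ord1 !mxE. Qed.

Lemma B31_E mu a b : B31 mu a b = Xf R mu a b.
Proof.
rewrite B31_E' /Xf.
by case: (ord3_cases mu) => ->; case: (ord3_cases a) => ->; case: (ord3_cases b) => ->;
  rewrite /=; lra.
Qed.

Lemma B32_inv : forall t, rho (grot 3 2 3 t) B32 = B32.
Proof.
move=> t; have h := cos2Dsin2 t.
apply/ffunP => mu; apply/matrixP => a b.
rewrite (@rhoEF _ _ O31 O32 _ _ B32f) //; last exact: B32_E.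
rewrite B32_E -/(B32f mu a b).
case: (ord3_cases mu) => ->; case: (ord3_cases a) => ->; case: (ord3_cases b) => ->;
rewrite /rotf /B32f /=; nra.
Qed.

Lemma B33_inv : forall t, rho (grot 3 2 3 t) B33 = B33.
Proof.
move=> t; have h := cos2Dsin2 t.
apply/ffunP => mu; apply/matrixP => a b.
rewrite (@rhoEF _ _ O31 O32 _ _ B33f) //; last exact: B33_E.
rewrite B33_E -/(B33f mu a b).
case: (ord3_cases mu) => ->; case: (ord3_cases a) => ->; case: (ord3_cases b) => ->;
rewrite /rotf /B33f /=; nra.
Qed.

Lemma lin3 n (P Q S : tup R n) (x y z : R) mu a b :
  (x *: P + y *: Q + z *: S) mu a b = x * P mu a b + y * Q mu a b + z * S mu a b.
Proof. by rewrite !ffunE !mxE. Qed.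

Lemma part1a (C : tup R 3) : inter_E _ C <-> in_Eij 3 2 3 C.
Proof.
split; first by move=> H; apply: H.
move=> H i j i2 ij j3.
have [-> ->] : i = 2%N /\ j = 3%N by lia.
exact: H.
Qed.

Lemma part1b_rev (C : tup R 3) : C \in <<[:: B31; B32; B33]>>%VS -> in_Eij 3 2 3 C.
Proof.
have [P0 [PD PZ]] := in_Eij_closed R 3 2 3.
apply: span_ind => // x; rewrite !inE => /or3P [/eqP ->|/eqP ->|/eqP ->].
- split; first by apply/son_HA; apply: Xf_HA => ???; exact: B31_E.
  move=> t; apply: (@Xinv _ 2 _ O31 O32) => // ???; exact: B31_E.
- split; last exact: B32_inv.
  by apply/son_HA => mu a b; rewrite !B32_E; ring.
- split; last exact: B33_inv.
  by apply/son_HA => mu a b; rewrite !B33_E; ring.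
Qed.

Lemma part1b_fw (C : tup R 3) : in_Eij 3 2 3 C -> C \in <<[:: B31; B32; B33]>>%VS.
Proof.
move=> [/son_HA ha inv].
have E := Epi2 (isT : O31 != O32) inv.
have Ep := Epi (isT : O31 != O32) inv.
have -> : C = C O31 O31 ord0 *: B31 + C O31 O32 ord0 *: B32 + C ord0 O31 O32 *: B33.
  apply/ffunP => mu; apply/matrixP => a b; rewrite lin3.
  move: (Ep mu a b) (E mu a b) (E mu b a) (ha mu a b).
  rewrite B31_E' B32_E B33_E -/(B31f mu a b) -/(B32f mu a b) -/(B33f mu a b).
  clear E Ep.
  case: (ord3_cases mu) => ->; case: (ord3_cases a) => ->; case: (ord3_cases b) => ->;
  rewrite /B31f /B32f /B33f /sg2 /sw /sgp /= => h1 h2 h3 h4; lra.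
apply: memvD; [apply: memvD|]; apply: memvZ; apply: memv_span; rewrite !inE eqxx ?orbT //.
Qed.
End S8.

Theorem mainTheorem1 (R : realType) :
  (forall C : tup R 3,
      (inter_E _ C <-> in_Eij 3 2 3 C) /\
      (in_Eij 3 2 3 C <->
       C \in <<[:: (tens (e R 3 2) (eA R 3 2 1) + tens (e R 3 3) (eA R 3 3 1))%R;
                   (tens (e R 3 2) (eA R 3 3 1) - tens (e R 3 3) (eA R 3 2 1))%R;
                   tens (e R 3 1) (eA R 3 2 3)]>>%VS)) /\
  (forall C : tup R 4,
      inter_E _ C <->
      C \in <<[:: (tens (e R 4 2) (eA R 4 2 1) + tens (e R 4 3) (eA R 4 3 1)
                    + tens (e R 4 4) (eA R 4 4 1))%R;
                  (tens (e R 4 2) (eA R 4 3 4) - tens (e R 4 3) (eA R 4 2 4)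
                    + tens (e R 4 4) (eA R 4 2 3))%R]>>%VS) /\
  (forall n : nat, (5 <= n)%N -> forall C : tup R n,
      inter_E _ C <->
      C \in <<[:: (\sum_(1 <= k < n.+1) tens (e R n k) (eA R n k 1))%R]>>%VS).
Proof.
split; [|split].
- move=> C; split; first exact: (part1a C).
  split; first exact: (@part1b_fw R C).
  exact: (@part1b_rev R C).
- move=> C; split; [exact: (@part2_fw R C) | exact: (@part2_rev R C)].
- exact: (@part3 R).
Qed.
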